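(* Let $F:\mathbb{R}^n\to\mathbb{R}$ be smooth, $L=\{(q,\nabla F(q)):q\in\mathbb{R}^n\}\subset\mathbb{R}^{2n}$, and $\Psi:\mathbb{R}^n\times\mathbb{R}^n\to\mathbb{R}^{2n}$, $\Psi(q,w)=(q+w,\nabla F(q)+\nabla^2F(q)w)$. Then the set $\Delta$ of critical points of $\Psi$ is $$\Delta=\{(q,w)\in\mathbb{R}^n\times\mathbb{R}^n:\ \text{the linear map }\mathbb{R}^n\ni\zeta\mapsto\nabla^3F(q)[\zeta,w]\in\mathbb{R}^n\ \text{is singular}\}.$$ Consequently, a point $\Psi(q,w)$ belongs to the wall $\Sigma=\Psi(\Delta)$ if and only if the linear map $\zeta\mapsto\nabla^3F(q)[\zeta,w]$ does not have full rank.
   Context: $\nabla^2F(q)$ is the Hessian matrix, and $\nabla^3F(q)[v,\zeta]=\big(\sum_{i,j}F_{1ij}(q)v_i\zeta_j,\dots,\sum_{i,j}F_{nij}(q)v_i\zeta_j\big)$ with $F_{kij}=\partial^3F/\partial q_k\partial q_i\partial q_j$. $L$ is a Lagrangian submanifold of $\mathbb{R}^{2n}$ (standard symplectic form $\sum dp_i\wedge dq_i$), $\mathbb{R}^n\times\mathbb{R}^n$ is identified with $TL$ via $(q,w)\mapsto$ the tangent vector $(w,\nabla^2F(q)w)$ at $(q,\nabla F(q))$, and $\Psi$ corresponds to $(X,W)\mapsto X+W$. *)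

(* Defs.v *)
From HB Require Import structures.
From mathcomp Require Import all_boot all_order all_algebra.
From mathcomp Require Import all_classical all_reals all_analysis.
Set Implicit Arguments. Unset Strict Implicit. Unset Printing Implicit Defensive.
Import Order.TTheory GRing.Theory Num.Theory.
Import numFieldNormedType.Exports.
Local Open Scope ring_scope.

Section Defs.
Variables (R : realType) (n : nat).

Definition ebasis (i : 'I_n) : 'rV[R]_n := delta_mx 0 i.

Definition partial (i : 'I_n) (f : 'rV[R]_n -> R) : 'rV[R]_n -> R :=
  fun x => 'D_(ebasis i) f x.

Definition iter_partial (s : seq 'I_n) (f : 'rV[R]_n -> R) : 'rV[R]_n -> R :=
  foldr partial f s.

Definition smooth (F : 'rV[R]_n -> R) : Prop :=
  forall (s : seq 'I_n) (x : 'rV[R]_n), differentiable (iter_partial s F) x.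

Definition grad (F : 'rV[R]_n -> R) (q : 'rV[R]_n) : 'rV[R]_n :=
  \row_i partial i F q.

Definition hess (F : 'rV[R]_n -> R) (q : 'rV[R]_n) : 'M[R]_n :=
  \matrix_(i, j) partial i (partial j F) q.

Definition d3 (F : 'rV[R]_n -> R) (q : 'rV[R]_n) (k i j : 'I_n) : R :=
  partial k (partial i (partial j F)) q.

Definition nabla3 (F : 'rV[R]_n -> R) (q v zeta : 'rV[R]_n) : 'rV[R]_n :=
  \row_k \sum_i \sum_j d3 F q k i j * v 0 i * zeta 0 j.

Definition Psi (F : 'rV[R]_n -> R) (x : 'rV[R]_n * 'rV[R]_n)
  : 'rV[R]_n * 'rV[R]_n :=
  (x.1 + x.2, grad F x.1 + \row_i \sum_j hess F x.1 i j * x.2 0 j).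

End Defs.

Definition critical_point (R : realType) (U V : normedModType R)
  (f : U -> V) (x : U) : Prop :=
  ~ (forall y : V, exists v : U, 'd f x v = y).

(* Main.v *)
Require Import Defs.
From HB Require Import structures.
From mathcomp Require Import all_boot all_order all_algebra.
From mathcomp Require Import all_classical all_reals all_analysis.
From mathcomp Require Import ring.
Import Order.TTheory GRing.Theory Num.Theory.
Import numFieldNormedType.Exports.
Local Open Scope classical_set_scope.
Local Open Scope ring_scope.
Set Implicit Arguments. Unset Strict Implicit.
Lemma sw (R : realType) (a b c d : R) : a - b - (c - d) = a - c - (b - d).
Proof. by ring. Qed.
Lemma line_is_derive (R : realType) n (g : 'rV[R]_n -> R) (u y : 'rV[R]_n) (s : R) :
  derivable g (s *: u + y) u ->
  is_derive s 1 (fun t : R => g (t *: u + y)) ('D_u g (s *: u + y)).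
Proof.
move=> dg.
have E : (fun h : R => h^-1 *: (((fun t => g (t *: u + y)) \o shift s) (h *: 1) - (fun t => g (t *: u + y)) s))
   = (fun h => h^-1 *: ((g \o shift (s *: u + y)) (h *: u) - g (s *: u + y))).
  apply/funext => h /=.
  by rewrite /shift /= [h *: 1]mulr1 scalerDl addrA.
apply: DeriveDef; first by rewrite /derivable E.
by rewrite /derive E.
Qed.

Lemma line_MVT (R : realType) n (g : 'rV[R]_n -> R) (u y : 'rV[R]_n) (h : R) :
  (forall z, differentiable g z) -> 0 < h ->
  exists2 s, 0 < s < h & g (h *: u + y) - g y = h * 'D_u g (s *: u + y).
Proof.
move=> dg h0.
have := @MVT R (fun t => g (t *: u + y)) (fun t => 'D_u g (t *: u + y)) 0 h h0.
case.
- by move=> x _; apply: line_is_derive; apply: diff_derivable.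
- apply: derivable_within_continuous => x _.
  by have [] := @line_is_derive R n g u y x (diff_derivable (dg _)).
move=> c; rewrite in_itv /= => c0 E; exists c => //.
by move: E; rewrite scale0r add0r subr0 mulrC.
Qed.

Lemma line_MVT2 (R : realType) n (g : 'rV[R]_n -> R) (u y1 y2 : 'rV[R]_n) (h : R) :
  (forall z, differentiable g z) -> 0 < h ->
  exists2 s, 0 < s < h & (g (h *: u + y1) - g (h *: u + y2)) - (g y1 - g y2)
      = h * ('D_u g (s *: u + y1) - 'D_u g (s *: u + y2)).
Proof.
move=> dg h0.
have := @MVT R (fun t => g (t *: u + y1) - g (t *: u + y2))
   (fun t => 'D_u g (t *: u + y1) - 'D_u g (t *: u + y2)) 0 h h0.
case.
- move=> x _; apply: is_deriveB; apply: line_is_derive; exact: diff_derivable.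
- apply: derivable_within_continuous => x _; apply: derivableB.
    by have [] := @line_is_derive R n g u y1 x (diff_derivable (dg _)).
  by have [] := @line_is_derive R n g u y2 x (diff_derivable (dg _)).
move=> c; rewrite in_itv /= => c0 E; exists c => //.
by move: E; rewrite !scale0r !add0r subr0 mulrC.
Qed.

Lemma schwarz_approx (R : realType) n (g : 'rV[R]_n -> R) (u v q : 'rV[R]_n) (h : R) :
  (forall z, differentiable g z) ->
  (forall z, differentiable ('D_u g) z) ->
  (forall z, differentiable ('D_v g) z) -> 0 < h ->
  exists a, exists b,
    [/\ `|a| <= h * (`|u| + `|v|), `|b| <= h * (`|u| + `|v|) &
      'D_v ('D_u g) (a + q) = 'D_u ('D_v g) (b + q)].
Proof.
move=> dg dug dvg h0.
have [s1 /andP[s10 s1h] E1] := @line_MVT2 R n g u (h *: v + q) q h dg h0.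
have [t1 /andP[t10 t1h] E2] := @line_MVT R n ('D_u g) v (s1 *: u + q) h dug h0.
have [s2 /andP[s20 s2h] E3] := @line_MVT2 R n g v (h *: u + q) q h dg h0.
have [t2 /andP[t20 t2h] E4] := @line_MVT R n ('D_v g) u (s2 *: v + q) h dvg h0.
exists (t1 *: v + s1 *: u), (t2 *: u + s2 *: v); split.
- rewrite (le_trans (ler_normD _ _)) // !normrZ !gtr0_norm // mulrDr [h * `|u| + _]addrC.
  by rewrite lerD // ler_wpM2r // ltW.
- rewrite (le_trans (ler_normD _ _)) // !normrZ !gtr0_norm // mulrDr.
  by rewrite lerD // ler_wpM2r // ltW.
rewrite -!addrA.
move: E1 E3.
rewrite [s1 *: u + (h *: v + q)]addrCA E2 [s2 *: v + (h *: u + q)]addrCA E4.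
rewrite [h *: u + (h *: v + q)]addrCA => E1 E3.
have := etrans (esym E1) (etrans (sw _ _ _ _) E3).
have hn0 : h != 0 by rewrite gt_eqF.
by move=> /(mulfI hn0) /(mulfI hn0).
Qed.


Lemma schwarz (R : realType) n (g : 'rV[R]_n -> R) (u v q : 'rV[R]_n) :
  (forall z, differentiable g z) ->
  (forall z, differentiable ('D_u g) z) ->
  (forall z, differentiable ('D_v g) z) ->
  differentiable ('D_v ('D_u g)) q -> differentiable ('D_u ('D_v g)) q ->
  'D_v ('D_u g) q = 'D_u ('D_v g) q.
Proof.
move=> dg dug dvg c1d c2d.
apply/eqP; apply/negPn/negP => neq.
have e0 : 0 < `|'D_v ('D_u g) q - 'D_u ('D_v g) q| / 2.
  by rewrite divr_gt0 // normr_gt0 subr_eq0.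
have /nbhs_ballP [d1 d10 H1] : \forall t \near q,
   `|'D_v ('D_u g) q - 'D_v ('D_u g) t| < `|'D_v ('D_u g) q - 'D_u ('D_v g) q| / 2.
  exact: (cvgrPdist_lt _ _).1 (differentiable_continuous c1d) _ e0.
have /nbhs_ballP [d2 d20 H2] : \forall t \near q,
   `|'D_u ('D_v g) q - 'D_u ('D_v g) t| < `|'D_v ('D_u g) q - 'D_u ('D_v g) q| / 2.
  exact: (cvgrPdist_lt _ _).1 (differentiable_continuous c2d) _ e0.
pose d := Num.min d1 d2.
have d0 : 0 < d by rewrite lt_min d10 d20.
pose h := d / (`|u| + `|v| + 1).
have X0 : 0 < `|u| + `|v| + 1 by rewrite ltr_wpDl // addr_ge0.
have h0 : 0 < h by rewrite divr_gt0.
have hX : h * (`|u| + `|v|) < d.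
  rewrite /h mulrAC ltr_pdivrMr // ltr_pM2l //.
  by rewrite ltrDl ltr01.
have [a [b [na nb E]]] := @schwarz_approx R n g u v q h dg dug dvg h0.
have B : forall (c : 'rV[R]_n) r, `|c| <= h * (`|u| + `|v|) -> d <= r -> ball q r (c + q).
  move=> c r cn dr; rewrite -ball_normE /ball_ /=.
  have -> : q - (c + q) = - c by rewrite opprD addrCA subrr addr0.
  by rewrite normrN (le_lt_trans cn) // (lt_le_trans hX).
have dd1 : d <= d1 by rewrite ge_min lexx.
have dd2 : d <= d2 by rewrite ge_min lexx orbT.
have := H1 _ (B _ _ na dd1).
have := H2 _ (B _ _ nb dd2).
rewrite -E => L2 L1.
have := ler_distD ('D_v ('D_u g) (a + q)) ('D_v ('D_u g) q) ('D_u ('D_v g) q).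
rewrite [X in _ <= _ + X]distrC.
move=> /le_lt_trans /(_ (ltrD L1 L2)); rewrite -splitr.
by rewrite ltxx.
Qed.
Lemma lin_cont_diff (R : numFieldType) (U V : normedModType R) (f : U -> V) :
  linear f -> continuous f -> forall x, differentiable f x /\ 'd f x = f :> (U -> V).
Proof.
move=> lin cont x.
pose fL : {linear U -> V} := HB.pack f (GRing.isLinear.Build _ _ _ _ f lin).
split; [exact: (@linear_differentiable _ _ _ fL x cont) | exact: (@diff_lin _ _ _ fL x cont)].
Qed.

Lemma fst_lcd (R : numFieldType) (U V : normedModType R) (x : U * V) :
  differentiable (fun y : U * V => y.1) x /\ 'd (fun y : U * V => y.1) x = (fun y : U * V => y.1) :> (U * V -> U).
Proof.
apply: lin_cont_diff; first by [].
by move=> y; exact: cvg_fst.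
Qed.

Lemma snd_lcd (R : numFieldType) (U V : normedModType R) (x : U * V) :
  differentiable (fun y : U * V => y.2) x /\ 'd (fun y : U * V => y.2) x = (fun y : U * V => y.2) :> (U * V -> V).
Proof.
apply: lin_cont_diff; first by [].
by move=> y; exact: cvg_snd.
Qed.

Lemma coord2_lcd (R : realType) n (j : 'I_n) (x : 'rV[R]_n * 'rV[R]_n) :
  differentiable (fun y : 'rV[R]_n * 'rV[R]_n => y.2 0 j) x /\
  'd (fun y : 'rV[R]_n * 'rV[R]_n => y.2 0 j) x = (fun y : 'rV[R]_n * 'rV[R]_n => y.2 0 j) :> ('rV[R]_n * 'rV[R]_n -> R).
Proof.
apply: lin_cont_diff.
  by move=> a y z /=; rewrite !mxE.
move=> y; apply: (@continuous_comp _ _ _ (fun y : 'rV[R]_n * 'rV[R]_n => y.2) (fun M : 'rV[R]_n => M 0 j)).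
  exact: cvg_snd.
exact: coord_continuous.
Qed.

Lemma D_fst (R : realType) n (G : 'rV[R]_n -> R) (x v : 'rV[R]_n * 'rV[R]_n) :
  'D_v (fun y : 'rV[R]_n * 'rV[R]_n => G y.1) x = 'D_(v.1) G x.1.
Proof. by []. Qed.

Lemma diff_fstc (R : realType) n (G : 'rV[R]_n -> R) (x : 'rV[R]_n * 'rV[R]_n) :
  differentiable G x.1 -> differentiable (fun y : 'rV[R]_n * 'rV[R]_n => G y.1) x.
Proof.
move=> dG.
have H := @differentiable_comp _ _ _ _ (fun y : 'rV[R]_n * 'rV[R]_n => y.1) G x (@fst_lcd _ _ _ x).1 dG.
exact: H.
Qed.

Lemma D_lin (R : numFieldType) (U V : normedModType R) (f : U -> V) x v :
  differentiable f x -> 'd f x = f :> (U -> V) -> 'D_v f x = f v.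
Proof. by move=> df E; rewrite deriveE // E. Qed.

Lemma D_scal (R : realType) n (k : 'rV[R]_n * 'rV[R]_n -> R) (e : 'rV[R]_n) x v :
  differentiable k x -> 'D_v (fun z => k z *: e) x = 'D_v k x *: e.
Proof.
move=> dk; rewrite deriveE; last exact: differentiableZl.
by rewrite diffZl // deriveE.
Qed.

Lemma dir_partial (R : realType) n (G : 'rV[R]_n -> R) (q a : 'rV[R]_n) :
  differentiable G q -> 'D_a G q = \sum_k a 0 k * partial k G q.
Proof.
move=> dG; rewrite deriveE // {1}(row_sum_delta a) linear_sum.
apply: eq_bigr => k _; rewrite linearZ /= /partial deriveE //.
Qed.

Lemma partial_comm0 (R : realType) n (F : 'rV[R]_n -> R) (i k : 'I_n) x :
  smooth F -> partial k (partial i F) x = partial i (partial k F) x.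
Proof.
move=> hF.
have := (@schwarz R n F (@ebasis R n i) (@ebasis R n k) x).
move=> H; apply: H.
- exact: (hF [::]).
- exact: (hF [:: i]).
- exact: (hF [:: k]).
- exact: (hF [:: k; i] x).
- exact: (hF [:: i; k] x).
Qed.

Lemma partial_comm1 (R : realType) n (F : 'rV[R]_n -> R) (i k j : 'I_n) x :
  smooth F -> partial k (partial i (partial j F)) x = partial i (partial k (partial j F)) x.
Proof.
move=> hF.
have := (@schwarz R n (partial j F) (@ebasis R n i) (@ebasis R n k) x).
move=> H; apply: H.
- exact: (hF [:: j]).
- exact: (hF [:: i; j]).
- exact: (hF [:: k; j]).
- exact: (hF [:: k; i; j] x).
- exact: (hF [:: i; k; j] x).
Qed.

Definition Afun (R : realType) n (F : 'rV[R]_n -> R) (i j : 'I_n) :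
  'rV[R]_n * 'rV[R]_n -> R := fun y => partial i (partial j F) y.1.
Arguments Afun {R n} F i j.
Definition Bfun (R : realType) n (j : 'I_n) :
  'rV[R]_n * 'rV[R]_n -> R := fun y => y.2 0 j.
Arguments Bfun {R n} j.
Definition hc (R : realType) n (F : 'rV[R]_n -> R) (i : 'I_n) :
  'rV[R]_n * 'rV[R]_n -> R :=
  (fun y => partial i F y.1) + \sum_j (Afun F i j * Bfun j).
Arguments hc {R n} F i.
Definition P1 (R : realType) n : 'rV[R]_n * 'rV[R]_n -> 'rV[R]_n :=
  (fun y => y.1) + (fun y => y.2).
Arguments P1 {R n}.
Definition P2 (R : realType) n (F : 'rV[R]_n -> R) :
  'rV[R]_n * 'rV[R]_n -> 'rV[R]_n :=
  \sum_i (fun y => hc F i y *: ebasis R i).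
Arguments P2 {R n} F.

Lemma Psi_eq (R : realType) n (F : 'rV[R]_n -> R) :
  Psi F = fun y => (P1 y, P2 F y).
Proof.
apply/funext => y; rewrite /Psi /P1 /P2; congr pair.
rewrite fct_sumE [LHS]row_sum_delta; apply: eq_bigr => i _; congr (_ *: _).
rewrite /hc !mxE fct_sumE; congr (_ + _); apply: eq_bigr => j _.
by rewrite !mxE.
Qed.

Lemma hc_diff (R : realType) n (F : 'rV[R]_n -> R) i x :
  smooth F -> differentiable (hc F i) x.
Proof.
move=> hF; apply: differentiableD.
  exact: diff_fstc (hF [:: i] _).
apply: differentiable_sum => j; apply: differentiableM.
  exact: diff_fstc (hF [:: i; j] _).
exact: (@coord2_lcd R n j x).1.
Qed.

Lemma D_hc (R : realType) n (F : 'rV[R]_n -> R) i x v :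
  smooth F -> 'D_v (hc F i) x =
  \sum_k v.1 0 k * partial k (partial i F) x.1 +
  \sum_j (partial i (partial j F) x.1 * v.2 0 j +
          x.2 0 j * \sum_k v.1 0 k * partial k (partial i (partial j F)) x.1).
Proof.
move=> hF.
have dA j : differentiable (Afun F i j) x by exact: diff_fstc (hF [:: i; j] _).
have dB j : differentiable (Bfun j) x by exact: (@coord2_lcd R n j x).1.
rewrite /hc deriveD; last 2 first.
- exact/diff_derivable/diff_fstc/(hF [:: i] _).
- apply/diff_derivable/differentiable_sum => j; exact: differentiableM.
rewrite D_fst dir_partial; last exact: (hF [:: i] _).
congr (_ + _).
rewrite derive_sum; last by move=> j; apply/diff_derivable/differentiableM.
apply: eq_bigr => j _.
rewrite deriveM; [|exact: diff_derivable|exact: diff_derivable].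
rewrite (D_lin _ (@coord2_lcd R n j x).1 (@coord2_lcd R n j x).2).
rewrite /Afun D_fst dir_partial; last exact: (hF [:: i; j] _).
by [].
Qed.

Lemma surj_unit (R : fieldType) n (M : 'M[R]_n) :
  (forall z : 'rV[R]_n, exists a, a *m M = z) -> M \in unitmx.
Proof.
move=> hs.
have [f hf] := @choice _ _ (fun (i : 'I_n) (a : 'rV[R]_n) => a *m M = delta_mx 0 i)
   (fun i => hs (delta_mx 0 i)).
have AM : (\matrix_i f i) *m M = 1%:M.
  by apply/row_matrixP => i; rewrite row_mul rowK hf row1.
by case/mulmx1_unit: AM.
Qed.

Lemma bij_unit (R : fieldType) n (M : 'M[R]_n) :
  bijective (fun a : 'rV[R]_n => a *m M) <-> M \in unitmx.
Proof.
split.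
  case=> g _ gK; apply: surj_unit => z; exists (g z); exact: gK.
move=> uM; exists (fun y => y *m invmx M) => y /=.
  by rewrite mulmxK.
by rewrite mulmxKV.
Qed.

Definition Hm (R : realType) n (F : 'rV[R]_n -> R) (q y : 'rV[R]_n) : 'rV[R]_n :=
  \row_i \sum_j hess F q i j * y 0 j.

Lemma HmE (R : realType) n (F : 'rV[R]_n -> R) (q y : 'rV[R]_n) :
  Hm F q y = y *m (hess F q)^T.
Proof.
apply/rowP => i; rewrite !mxE; apply: eq_bigr => j _.
by rewrite !mxE mulrC.
Qed.

Definition Nmx (R : realType) n (F : 'rV[R]_n -> R) (q w : 'rV[R]_n) : 'M[R]_n :=
  \matrix_(k, i) \sum_j d3 F q i k j * w 0 j.

Lemma nabla3E (R : realType) n (F : 'rV[R]_n -> R) (q a w : 'rV[R]_n) :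
  nabla3 F q a w = a *m Nmx F q w.
Proof.
apply/rowP => i; rewrite !mxE; apply: eq_bigr => k _.
rewrite !mxE mulr_sumr; apply: eq_bigr => j _.
ring.
Qed.

Lemma dPsi (R : realType) n (F : 'rV[R]_n -> R) (hF : smooth F)
  (x v : 'rV[R]_n * 'rV[R]_n) :
  'd (Psi F) x v =
  (v.1 + v.2, Hm F x.1 v.1 + nabla3 F x.1 v.1 x.2 + Hm F x.1 v.2).
Proof.
have dP1 : differentiable P1 x.
  exact: differentiableD (@fst_lcd _ _ _ x).1 (@snd_lcd _ _ _ x).1.
have dhc i : differentiable (fun y => hc F i y *: ebasis R i) x.
  exact/differentiableZl/hc_diff.
have dP2 : differentiable (P2 F) x by exact: differentiable_sum.
rewrite Psi_eq diff_pair //=; congr pair.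
  rewrite -deriveE // deriveD; last 2 first.
  - exact/diff_derivable/(@fst_lcd _ _ _ x).1.
  - exact/diff_derivable/(@snd_lcd _ _ _ x).1.
  by rewrite (D_lin _ (@fst_lcd _ _ _ x).1 (@fst_lcd _ _ _ x).2)
             (D_lin _ (@snd_lcd _ _ _ x).1 (@snd_lcd _ _ _ x).2).
rewrite -deriveE // /P2 derive_sum; last by move=> i; exact: diff_derivable.
rewrite [RHS]row_sum_delta; apply: eq_bigr => i _.
rewrite D_scal; last exact: hc_diff.
congr (_ *: _); rewrite D_hc //.
have HmI y : Hm F x.1 y 0 i = \sum_j partial i (partial j F) x.1 * y 0 j.
  by rewrite mxE; apply: eq_bigr => j _; rewrite mxE.
rewrite !mxE.
under [X in _ = X + _ + _]eq_bigr => j _ do rewrite mxE.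
under [X in _ = _ + X]eq_bigr => j _ do rewrite mxE.
under eq_bigr => k _ do rewrite (partial_comm0 _ _ _ hF).
under [X in _ + X = _]eq_bigr => j _ do under eq_bigr => k _ do rewrite (partial_comm1 _ _ _ _ hF).
rewrite big_split /= [X in _ + X = _]addrC addrA; congr (_ + _ + _).
- by apply: eq_bigr => k _; rewrite mulrC.
- rewrite exchange_big /=; apply: eq_bigr => k _.
  rewrite mulr_sumr; apply: eq_bigr => j _.
  rewrite /d3; ring.
Qed.

Lemma grp1 (V : zmodType) (P Q y : V) : P + (y - Q) + (Q - P) = y.
Proof. by rewrite addrC addrA subrK addrC subrK. Qed.
Lemma grp2 (V : zmodType) (A N : V) : N = A + N + - A.
Proof. by rewrite addrAC subrr add0r. Qed.

Lemma surjD_iff (R : realType) n (F : 'rV[R]_n -> R) (hF : smooth F)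
  (x : 'rV[R]_n * 'rV[R]_n) :
  (forall y, exists v, 'd (Psi F) x v = y) <-> Nmx F x.1 x.2 \in unitmx.
Proof.
split.
  move=> hs; apply: surj_unit => z.
  have [v] := hs (0, z); rewrite dPsi // => -[h1 h2].
  exists v.1; rewrite -nabla3E -h2 !HmE.
  have -> : v.2 = - v.1 by apply/eqP; rewrite -addr_eq0 addrC h1.
  by rewrite mulNmx -grp2.
move=> uM [y1 y2].
pose a := (y2 - Hm F x.1 y1) *m invmx (Nmx F x.1 x.2).
exists (a, y1 - a); rewrite dPsi //=; congr pair.
  by rewrite addrC subrK.
rewrite nabla3E mulmxKV // !HmE mulmxBl.
exact: grp1.
Qed.

Unset Implicit Arguments.
Set Strict Implicit.

Theorem mainTheorem17 (R : realType) (n : nat) (F : 'rV[R]_n -> R)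
  (hF : smooth F) :
  let Delta := [set x : 'rV[R]_n * 'rV[R]_n | critical_point (Psi F) x] in
  let S := [set x : 'rV[R]_n * 'rV[R]_n |
              ~ bijective (fun zeta : 'rV[R]_n => nabla3 F x.1 zeta x.2)] in
  Delta = S /\ (Psi F) @` Delta = (Psi F) @` S.
Proof.
move=> Delta S.
have E : Delta = S.
  rewrite /Delta /S; apply/seteqP; split => x /=;
  (have NE : (fun zeta => nabla3 F x.1 zeta x.2) = (fun a => a *m Nmx F x.1 x.2)
    by apply/funext => a; exact: nabla3E);
  rewrite /critical_point NE.
    move=> nc bj; apply: nc; apply/(iffRL (surjD_iff hF x)).
    exact: (iffLR (bij_unit _) bj).
  move=> nb sj; apply: nb; apply: (iffRL (bij_unit _)).
  exact: (iffLR (surjD_iff hF x) sj).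
by split; rewrite ?E.
Qed.
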